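(* Let $T$ be a tournament with an even number of arcs. Then $T$ has a $\overrightarrow{P_3}$-decomposition if and only if $$a(X,Y)\le a(Y,X)+a(X)+a(Y)+a(Z,X)+a(Y,Z)$$ for every partition $V(T)=X\cup Y\cup Z$ into three pairwise disjoint (possibly empty) sets.
   Context: A tournament is an orientation of a complete graph. A $\overrightarrow{P_3}$-decomposition of a digraph $D$ is a partition of $A(D)$ into directed paths of length $2$ (pairs of arcs $(u,v),(v,w)$). For $X,Y\subseteq V(T)$, $a(X,Y)$ is the number of arcs with tail in $X$ and head in $Y$, and $a(X)=a(X,X)$. *)

(* Defs.v *)
From mathcomp Require Import all_boot.
Set Implicit Arguments. Unset Strict Implicit. Unset Printing Implicit Defensive.

Definition tournament (V : finType) (arc : rel V) : Prop :=
  (forall x, ~~ arc x x) /\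
  (forall x y, x != y -> (arc x y (+) arc y x)).

Definition arcs (V : finType) (arc : rel V) : {set V * V} :=
  [set p | arc p.1 p.2].

Definition a_ (V : finType) (arc : rel V) (X Y : {set V}) : nat :=
  #|[set p : V * V | [&& p.1 \in X, p.2 \in Y & arc p.1 p.2]]|.

(* A directed path of length 2, (u,v),(v,w), encoded as the triple (u,v,w). *)
Definition is_P3 (V : finType) (arc : rel V) (t : V * V * V) : bool :=
  arc t.1.1 t.1.2 && arc t.1.2 t.2.

Definition P3_arcs (V : finType) (t : V * V * V) : {set V * V} :=
  [set (t.1.1, t.1.2); (t.1.2, t.2)].

Definition P3_decomposition (V : finType) (arc : rel V) (P : {set V * V * V})
  : Prop :=
  (forall t, t \in P -> is_P3 arc t) /\
  partition [set P3_arcs t | t in P] (arcs arc) /\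
  {in P &, injective (@P3_arcs V)}.

Definition has_P3_decomposition (V : finType) (arc : rel V) : Prop :=
  exists P : {set V * V * V}, P3_decomposition arc P.

(* Main.v *)
Require Import Defs.
From mathcomp Require Import all_boot zify.
Set Implicit Arguments. Unset Strict Implicit. Unset Printing Implicit Defensive.


Lemma card_sum (T : finType) (P : pred T) : #|P| = \sum_(x : T) (P x : nat).
Proof. rewrite -sum1_card big_mkcond /=; apply eq_bigr => x _; by rewrite unfold_in; case: (P x). Qed.

Lemma sum_eq1 (T : finType) (S : {set T}) (p : T) :
  \sum_(v in S) ((v == p) : nat) = (p \in S).
Proof.
case: (boolP (p \in S)) => pS.
  rewrite (big_setD1 p pS) eqxx big1 //= => v; rewrite in_setD1 => /andP [vp _].
  by rewrite (negbTE vp).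
by rewrite big1 // => v vS; case: eqP => // vp; rewrite -vp vS in pS.
Qed.

Section FF.
Variable V : finType.
Implicit Types (f : V -> nat) (S T : {set V}).

Definition sf f S := \sum_(v in S) f v.
Definition Cond f := forall S T, [disjoint S & T] ->
  sf f T + #|T| * #|S| <= sf f S + #|T| * (#|V| - 1).

Lemma sf_le f S c : (forall v, f v <= c) -> sf f S <= #|S| * c.
Proof. by move=> h; rewrite /sf -sum_nat_const; apply: leq_sum => v _. Qed.

Lemma sfD1 f S p : p \in S -> sf f S = f p + sf f (S :\ p).
Proof. by move=> h; rewrite /sf (big_setD1 p h). Qed.

Lemma sfU1 f S p : p \notin S -> sf f (p |: S) = f p + sf f S.
Proof. by move=> h; rewrite /sf (big_setU1 p h). Qed.

Lemma card_disjU S T : [disjoint S & T] -> #|S :|: T| = #|S| + #|T|.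
Proof. by move=> h; rewrite cardsU (disjoint_setI0 h) cards0 subn0. Qed.

Lemma cardD1' S p : p \in S -> #|S| = (#|S :\ p|).+1.
Proof. by move=> h; rewrite (cardsD1 p S) h. Qed.

Lemma card_lt_out S p : p \notin S -> #|S| < #|V|.
Proof.
move=> h; have := max_card (p |: S); rewrite cardsU1 h.
by rewrite /= add1n.
Qed.

Lemma disjU1r S T p : p \notin S -> [disjoint S & T] -> [disjoint S & p |: T].
Proof.
move=> pS d; rewrite disjoints_subset; apply/subsetP => x xS; rewrite !inE.
rewrite (disjointFr d xS) orbF; by apply: contraNneq pS => <-.
Qed.

Lemma disjD1l S T p : [disjoint S & T] -> [disjoint S :\ p & T].
Proof. by move=> d; apply: disjointWl d; apply: subsetDl. Qed.

Variables (f : V -> nat) (p q : V).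
Hypotheses (hC : Cond f) (hmax : forall v, f v <= f p) (pq : p != q) (fq : 0 < f q).

Lemma fp_pos : 0 < f p.
Proof. exact: leq_trans fq (hmax q). Qed.

Lemma caseC S T : [disjoint S & T] -> q \in S -> p \notin S -> p \notin T ->
  sf f T + #|T| * #|S| + 1 <= sf f S + #|T| * (#|V| - 1).
Proof.
move=> dST qS pS pT.
have hT := sf_le T hmax.
have dS' : [disjoint S & p |: T].
  exact: disjU1r.
have L1 := hC dS'.
rewrite sfU1 // cardsU1 pT add1n !mulSn in L1.
have fSq : f q <= sf f S by rewrite (sfD1 f qS) leq_addr.
have sn := card_lt_out pS.
case: (leqP #|V| (f p + #|S|)) => h.
  lia.
have h2 : #|T| * (f p + #|S|) <= #|T| * (#|V| - 1) by apply: leq_mul => //; lia.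
rewrite mulnDr in h2.
lia.
Qed.

Lemma caseB S T : [disjoint S & T] -> p \in S -> q \notin S -> q \notin T ->
  sf f T + #|T| * #|S| + 1 <= sf f S + #|T| * (#|V| - 1).
Proof.
move=> dST pS qS qT.
have hT := sf_le T hmax.
have L2 := hC (disjD1l p dST).
rewrite (sfD1 f pS) (cardD1' pS) mulnS.
have hfp := fp_pos.
have sn : #|S :\ p| + #|T| + 2 <= #|V|.
  have := max_card (q |: (S :|: T)).
  rewrite cardsU1 !inE negb_or qS qT card_disjU // (cardD1' pS) /=; lia.
case: (leqP (f p) #|T|) => h.
  have h2 : #|T| * (f p + #|S :\ p|.+1) <= #|T| * (#|V| - 1) by apply: leq_mul => //; lia.
  rewrite mulnDr mulnS in h2.
  lia.
lia.
Qed.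

Lemma sf2 S : p \in S -> q \in S -> f p + f q <= sf f S.
Proof.
move=> pS qS; rewrite (sfD1 f pS) leq_add2l.
have qS' : q \in S :\ p by rewrite !inE eq_sym pq.
by rewrite (sfD1 f qS') leq_addr.
Qed.

Lemma sf_total S T : [disjoint S & T] ->
  \sum_v f v = sf f S + sf f T + sf f (~: (S :|: T)).
Proof.
move=> d; rewrite /sf -bigU //= -bigU /=; last first.
  rewrite disjoint_subset; apply/subsetP => v; rewrite !inE; by case: (v \in S); case: (v \in T).
apply: eq_bigl => v; rewrite !inE; by case: (v \in S); case: (v \in T).
Qed.

Lemma caseA (hev : ~~ odd (\sum_v f v)) S T : [disjoint S & T] -> p \in S -> q \in S ->
  sf f T + #|T| * #|S| + 2 <= sf f S + #|T| * (#|V| - 1).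
Proof.
move=> dST pS qS.
have hT := sf_le T hmax.
have h2 := sf2 pS qS.
have hfp := fp_pos.
have sn := card_lt_out (negbT (disjointFr dST pS)).
have hR := cardsC (S :|: T); rewrite card_disjU // in hR.
case: (leqP #|V| (f p + #|S|)) => h; last first.
  have h3 : #|T| * (f p + #|S|) <= #|T| * (#|V| - 1) by apply: leq_mul => //; lia.
  rewrite mulnDr in h3.
  lia.
have qS' : q \in S :\ p by rewrite !inE eq_sym pq.
have pS' : p \notin S :\ p by rewrite !inE eqxx.
have L := caseC (disjD1l p dST) qS' pS' (negbT (disjointFr dST pS)).
rewrite (sfD1 f pS) (cardD1' pS) mulnS.
case: (posnP #|~: (S :|: T)|) => hr; last by lia.
move/eqP: hr; rewrite cards_eq0 => /eqP hR0.
have tot := sf_total dST; rewrite hR0 /sf big_set0 addn0 -/(sf f S) -/(sf f T) in tot.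
rewrite (sfD1 f pS) in tot.
case: (posnP #|T|) => ht.
  rewrite ht !mul0n. have := hT; rewrite ht mul0n. lia.
move: hR; rewrite hR0 cards0 addn0 (cardD1' pS) => hR.
have e1 : #|V| - 1 = (#|S :\ p| + 1) + (#|T| - 1) by lia.
have e2 : #|T| * (#|V| - 1) = #|T| * #|S :\ p| + #|T| + #|T| * (#|T| - 1).
  by rewrite e1 !mulnDr muln1.
have ev2 : ~~ odd (#|T| * (#|T| - 1)).
  by rewrite oddM; case: #|T| ht => // t _ /=; rewrite subn1 /=; case: (odd t).
rewrite e2 in L *.
move: ev2 hev; rewrite tot.
move=> /negbTE ev2 /negbTE hev.
have [k hk] : exists k, #|T| * (#|T| - 1) = k.*2
  by exists (#|T| * (#|T| - 1))./2; rewrite -[LHS]odd_double_half ev2.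
have [j hj] : exists j, f p + sf f (S :\ p) + sf f T = j.*2
  by exists (f p + sf f (S :\ p) + sf f T)./2; rewrite -[LHS]odd_double_half hev.
rewrite -!muln2 in hk hj. have := cardD1' pS. lia.
Qed.

Definition fr v := f v - (v == p) - (v == q).

Lemma fE v : f v = fr v + (v == p) + (v == q).
Proof.
rewrite /fr; have hfp := fp_pos.
case: (eqVneq v p) => [->|vp].
  rewrite (negbTE pq) /= !subn0 addn0; lia.
case: (eqVneq v q) => [->|vq] /=; last by rewrite !subn0 !addn0.
lia.
Qed.

Lemma sfE S : sf f S = sf fr S + (p \in S) + (q \in S).
Proof.
by rewrite /sf (eq_bigr _ (fun v _ => fE v)) !big_split /= !sum_eq1.
Qed.

Lemma sum_eq1T (p0 : V) : \sum_v ((v == p0) : nat) = 1.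
Proof. by rewrite (bigD1 p0) //= eqxx big1 // => v /negbTE ->. Qed.

Lemma sumE : \sum_v f v = \sum_v fr v + 2.
Proof.
rewrite (eq_bigr _ (fun v _ => fE v)) !big_split /=. by rewrite (sum_eq1T p) (sum_eq1T q) -addnA.
Qed.

Lemma Cond_fr (hev : ~~ odd (\sum_v f v)) : Cond fr.
Proof.
move=> S T d; have base := hC d; move: base; rewrite (sfE S) (sfE T).
case pS: (p \in S); case qS: (q \in S).
- have := caseA hev d pS qS; rewrite (sfE S) (sfE T) pS qS.
  by rewrite (disjointFr d pS) (disjointFr d qS) /=; lia.
- case qT: (q \in T).
    by rewrite (disjointFr d pS) /=; lia.
  have := caseB d pS (negbT qS) (negbT qT); rewrite (sfE S) (sfE T) pS qS qT.
  by rewrite (disjointFr d pS) /=; lia.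
- case pT: (p \in T).
    by rewrite (disjointFr d qS) /=; lia.
  have := caseC d qS (negbT pS) (negbT pT); rewrite (sfE S) (sfE T) pS qS pT.
  by rewrite (disjointFr d qS) /=; lia.
- case pT: (p \in T); case qT: (q \in T) => /=; lia.
Qed.

End FF.

Section Switch.
Variable V : finType.

Definition deg (H : rel V) v := \sum_w (H v w : nat).
Definition realizes (H : rel V) (f : V -> nat) :=
  [/\ (forall x, ~~ H x x), (forall x y, H x y = H y x) & (forall v, deg H v = f v)].

Definition ed (a b : V) (v w : V) := ((v == a) && (w == b)) || ((v == b) && (w == a)).

Lemma ed_sym a b v w : ed a b v w = ed a b w v.
Proof. by rewrite /ed; case: (v == a); case: (v == b); case: (w == a); case: (w == b). Qed.

Lemma ed_irr a b v : a != b -> ~~ ed a b v v.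
Proof.
move=> ab; rewrite /ed; apply/norP; split; apply/negP => /andP [/eqP e1 /eqP e2];
 by move: ab; rewrite -e1 -e2 eqxx.
Qed.

Lemma deg_ed a b v : a != b -> \sum_w (ed a b v w : nat) = (v == a) + (v == b).
Proof.
move=> ab.
have pt : forall w, (ed a b v w : nat) = (v == a) * (w == b) + (v == b) * (w == a).
  move=> w; rewrite /ed.
  case va: (v == a); case vb: (v == b) => /=.
  - by move: ab; rewrite -(eqP va) -(eqP vb) eqxx.
  - by rewrite orbF mul1n mul0n addn0.
  - by rewrite mul1n mul0n.
  - by [].
rewrite (eq_bigr _ (fun w _ => pt w)) big_split /= -!big_distrr /=.
by rewrite !sum_eq1T !muln1.
Qed.

Lemma ed_H (H : rel V) a b v w : (forall x y, H x y = H y x) -> ed a b v w -> H v w = H a b.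
Proof.
move=> sym /orP [] /andP [/eqP -> /eqP ->] //; exact: sym.
Qed.

Lemma ed_ed a b c d v w : ed a b v w -> ed c d v w ->
  ((a == c) && (b == d)) || ((a == d) && (b == c)).
Proof.
rewrite /ed => /orP [] /andP [/eqP e1 /eqP e2] /orP [] /andP [/eqP e3 /eqP e4];
  by rewrite -e1 -e2 -e3 -e4 !eqxx ?orbT.
Qed.

Lemma natb_or (h e : bool) : (e -> ~~ h) -> ((h || e) : nat) = h + e.
Proof. by case: h; case: e => // /(_ isT). Qed.

Lemma natb_comb (h e1 e2 e3 : bool) : (e1 -> h) -> (e2 -> ~~ h) -> (e3 -> ~~ h) ->
  ~~ (e2 && e3) -> ~~ (e1 && e2) -> ~~ (e1 && e3) ->
  ((h && ~~ e1) || e2 || e3 : nat) + e1 = h + e2 + e3.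
Proof.
case: h; case: e1; case: e2; case: e3 => //= A B C D E F;
  try (by move: (A isT)); try (by move: (B isT)); by move: (C isT).
Qed.

End Switch.


Section Main.
Variable V : finType.

Lemma switch (f : V -> nat) p q (H' : rel V) :
  Cond f -> (forall v, f v <= f p) -> p != q -> 0 < f q ->
  (forall j, j != p -> 0 < f j -> f q <= f j) ->
  realizes H' (fr f p q) -> exists H, realizes H f.
Proof.
move=> hC hmax pq fq qmin [irr0 sym dg].
have irr : forall x, H' x x = false by move=> x; apply: negbTE.
have fEv := fE hmax pq fq.
have hfp := fp_pos hmax fq.
case: (boolP (H' p q)) => Hpq; last first.
  exists (fun a b => H' a b || ed p q a b); split.
  - by move=> x; rewrite irr /= ed_irr.
  - by move=> x y; rewrite sym ed_sym.
  move=> v; rewrite /deg.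
  rewrite (eq_bigr (fun w => (H' v w : nat) + ed p q v w)); last first.
    move=> w _; apply: natb_or => e; rewrite (ed_H sym e); exact: Hpq.
  rewrite big_split /= deg_ed // -/(deg H' v) dg. by rewrite addnA -fEv.
case: (boolP [exists x, exists y, [&& x != p, ~~ H' p x, y != q, ~~ H' q y,
                                    x != y & H' x y]]).
  case/existsP => x /existsP [y /and5P [xp npx yq nqy /andP [xy Hxy]]].
  have xq : x != q by apply: contraNneq npx => ->.
  have yp : y != p by apply: contraNneq nqy => ->; rewrite sym.
  exists (fun a b => (H' a b && ~~ ed x y a b) || ed p x a b || ed q y a b); split.
  - move=> v; rewrite irr /=; apply/norP; split; apply: ed_irr; by rewrite eq_sym.
  - by move=> a b; rewrite sym !(ed_sym _ _ a b).
  move=> v; rewrite /deg.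
  have tot : \sum_w ((H' v w && ~~ ed x y v w) || ed p x v w || ed q y v w : nat)
      + \sum_w (ed x y v w : nat) = 
      \sum_w (H' v w : nat) + \sum_w (ed p x v w : nat) + \sum_w (ed q y v w : nat).
    rewrite -!big_split /=; apply: eq_bigr => w _.
    rewrite -(natb_comb (h := H' v w) (e1 := ed x y v w)) //.
    + by move=> e; rewrite (ed_H sym e).
    + by move=> e; rewrite (ed_H sym e).
    + by move=> e; rewrite (ed_H sym e).
    + apply/negP => /andP [e1 e2]; have := ed_ed e1 e2.
      by rewrite (negbTE pq) /= => /andP [/eqP pe _]; move: yp; rewrite -pe eqxx.
    + apply/negP => /andP [e1 e2]; have := ed_ed e1 e2.
      rewrite (negbTE xp) eqxx /= => /eqP ye; by move: yp; rewrite ye eqxx.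
    + apply/negP => /andP [e1 e2]; have := ed_ed e1 e2.
      rewrite (negbTE xq) /= => /andP [/eqP xe _]; by move: xy; rewrite xe eqxx.
  move: tot; rewrite !deg_ed // 1?eq_sym // -/(deg H' v) dg.
  have := fEv v; lia.
move=> noex; exfalso.
have noE : forall w z, w != p -> ~~ H' p w -> z != q -> ~~ H' q z -> w != z -> ~~ H' w z.
  move=> w z wp npw zq nqz wz; apply/negP => Hwz; move/negP: noex; apply.
  by apply/existsP; exists w; apply/existsP; exists z; rewrite wp npw zq nqz wz Hwz.
have zero : forall w, w != p -> ~~ H' p w -> f w = 0.
  move=> w wp npw; case: (posnP (f w)) => // fw; exfalso.
  have wq : w != q by apply: contraNneq npw => ->.
  have pt : forall z, (H' w z : nat) + (z == p) <= (z == q) + H' q z.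
    move=> z; case: (eqVneq z p) => [->|zp].
      by rewrite sym (negbTE npw) (sym q p) Hpq (negbTE pq).
    rewrite addn0; case Hwz: (H' w z) => //.
    case: (eqVneq z q) => // zq /=.
    case Hqz: (H' q z) => //.
    have wz : w != z by apply: contraTneq Hwz => ->; rewrite irr.
    by move: (noE w z wp npw zq (negbT Hqz) wz); rewrite Hwz.
  have : \sum_z ((H' w z : nat) + (z == p)) <= \sum_z ((z == q) + H' q z)
    by apply: leq_sum => z _; exact: pt z.
  rewrite !big_split /= (sum_eq1T p) (sum_eq1T q).
  rewrite -/(deg H' w) -/(deg H' q) !dg.
  have := fEv w; have := fEv q; rewrite (negbTE wp) (negbTE wq) eqxx eq_sym (negbTE pq).
  have := qmin w wp fw. lia.
pose Z := [set w | (w != p) && (f w == 0)].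
have pZ : p \notin Z by rewrite inE eqxx.
have d : [disjoint Z & [set p]] by rewrite disjoint_sym disjoints1.
have := hC _ _ d.
have sZ : sf f Z = 0 by rewrite /sf big1 // => w; rewrite inE => /andP [_ /eqP].
rewrite sZ /sf big_set1 cards1 !mul1n.
have cZ : #|Z| = \sum_w (((w != p) && (f w == 0)) : nat).
  rewrite -sum1_card big_mkcond /=; apply: eq_bigr => w _; rewrite inE.
  by case: (_ && _).
have pt : forall w, 1 <= (w == p) + ((w != p) && (f w == 0)) + H' p w.
  move=> w; case: (eqVneq w p) => //= wp.
  case fw0: (f w == 0) => //=.
  case Hpw: (H' p w) => //; by rewrite (zero w wp (negbT Hpw)) in fw0.
have e1V : \sum_(w : V) (1 : nat) = #|V| by rewrite sum1_card.
have : \sum_(w : V) (1 : nat) <= \sum_w ((w == p) + ((w != p) && (f w == 0)) + H' p w)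
  by apply: leq_sum => w _; exact: pt w.
rewrite !big_split /= e1V (sum_eq1T p) -cZ.
rewrite -/(deg H' p) dg; have := fEv p; rewrite eqxx (negbTE pq).
rewrite /=; lia.
Qed.

Theorem ffactor (f : V -> nat) : ~~ odd (\sum_v f v) -> Cond f ->
  exists H, realizes H f.
Proof.
move: (leqnn (\sum_v f v)); move: {2}(\sum_v f v) => k.
elim: k f => [|k IH] f hk hev hC.
  exists (fun _ _ => false); split => // v.
  rewrite /deg big1 //; symmetry; apply/eqP; rewrite -leqn0.
  apply: leq_trans hk; exact: (leq_bigmax_cond _ _) || by rewrite (bigD1 v) //= leq_addr.
case: (boolP [forall v, f v == 0]) => [/forallP f0|].
  exists (fun _ _ => false); split => // v.
  by rewrite /deg big1 // (eqP (f0 v)).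
rewrite negb_forall => /existsP [v0 fv0].
have [p hmax] : exists p, forall j, f j <= f p.
  by case: (@arg_maxnP _ v0 xpredT f isT) => i _ h; exists i => j; exact: h.
have fp : 0 < f p by apply: leq_trans (hmax v0); rewrite lt0n.
have [w0 /andP [w0p fw0]] : exists w, (w != p) && (0 < f w).
  apply/existsP; apply: contraT; rewrite negb_exists => /forallP hw.
  have d : [disjoint [set~ p] & [set p]] by rewrite disjoint_sym disjoints1 !inE eqxx.
  have := hC _ _ d.
  rewrite /sf big_set1 cards1 !mul1n big1; last first.
    move=> w; rewrite !inE => wp; move: (hw w); rewrite wp /= lt0n negbK => /eqP //.
  rewrite cardsC1; lia.
have [q [qp fq qmin]] : exists q, [/\ q != p, 0 < f q &
                                     forall j, j != p -> 0 < f j -> f q <= f j].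
  have P0 : (fun i => (i != p) && (0 < f i)) w0 by rewrite /= w0p fw0.
  case: (@arg_minnP _ w0 (fun i => (i != p) && (0 < f i)) f P0) => i /andP [ip fi] h.
  exists i; split => // j jp fj; apply: h; by rewrite jp fj.
have pq : p != q by rewrite eq_sym.
have hs := sumE hmax pq fq.
have [H' HH'] : exists H', realizes H' (fr f p q).
  apply: IH.
  - lia.
  - by move: hev; rewrite hs addn2 /=; rewrite negbK.
  - exact: Cond_fr.
exact: switch hC hmax pq fq qmin HH'.
Qed.

End Main.


Section Tour.
Variable V : finType.
Variable arc : rel V.

Lemma card_set_sum (T : finType) (Q : pred T) : #|[set x | Q x]| = \sum_x (Q x : nat).
Proof.
rewrite -sum1_card big_mkcond; apply: eq_bigr => x _; rewrite !inE; by case: (Q x).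
Qed.

Lemma aE (X Y : {set V}) : a_ arc X Y = \sum_(u in X) \sum_(v in Y) (arc u v : nat).
Proof.
rewrite /a_ card_set_sum -(pair_bigA _ (fun u v => ([&& u \in X, v \in Y & arc u v] : nat))) /=.
rewrite [RHS]big_mkcond; apply: eq_bigr => u _.
case: (u \in X) => /=; last by rewrite big1.
by rewrite [RHS]big_mkcond; apply: eq_bigr => v _; case: (v \in Y).
Qed.

Lemma aUl (X1 X2 Y : {set V}) : [disjoint X1 & X2] -> a_ arc (X1 :|: X2) Y = a_ arc X1 Y + a_ arc X2 Y.
Proof.
move=> d; rewrite !aE -bigU //; apply: eq_bigl => u; by rewrite !inE.
Qed.

Lemma aUr (X Y1 Y2 : {set V}) : [disjoint Y1 & Y2] -> a_ arc X (Y1 :|: Y2) = a_ arc X Y1 + a_ arc X Y2.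
Proof.
move=> d; rewrite !aE -big_split; apply: eq_bigr => u _.
rewrite -bigU //; apply: eq_bigl => v; by rewrite !inE.
Qed.

Lemma disjC (S T : {set V}) : [disjoint S & T] -> [disjoint S :|: T & ~: (S :|: T)].
Proof. move=> _; by rewrite disjoints_subset setCK. Qed.

Lemma setT3 (S T : {set V}) : [set: V] = (S :|: T) :|: ~: (S :|: T).
Proof. by rewrite setUCr. Qed.

Lemma a3l (S T Y : {set V}) : [disjoint S & T] ->
  a_ arc [set: V] Y = a_ arc S Y + a_ arc T Y + a_ arc (~: (S :|: T)) Y.
Proof. by move=> d; rewrite (setT3 S T) aUl ?disjC // aUl. Qed.

Lemma a3r (S T X : {set V}) : [disjoint S & T] ->
  a_ arc X [set: V] = a_ arc X S + a_ arc X T + a_ arc X (~: (S :|: T)).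
Proof. by move=> d; rewrite (setT3 S T) aUr ?disjC // aUr. Qed.

Hypothesis htour : tournament arc.

Lemma arcF x : arc x x = false.
Proof. by case: htour => h _; apply: negbTE. Qed.

Lemma arc_xor x y : x != y -> (arc x y : nat) + arc y x = 1.
Proof. by case: htour => _ h /h; case: (arc x y); case: (arc y x). Qed.

Lemma aST (S T : {set V}) : [disjoint S & T] -> a_ arc S T + a_ arc T S = #|T| * #|S|.
Proof.
move=> d; rewrite !aE (exchange_big _ _ _ (mem T)) -big_split /=.
rewrite mulnC -sum_nat_const; apply: eq_bigr => u uS.
rewrite -big_split -sum1_card /=; apply: eq_bigr => v vT.
apply: arc_xor; apply: contraTneq vT => <-; by rewrite (disjointFr d uS).
Qed.

Lemma inout v : \sum_u (arc u v : nat) + \sum_w (arc v w : nat) = #|V| - 1.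
Proof.
rewrite -big_split /= (bigD1 v) //= arcF add0n.
rewrite (eq_bigr (fun _ => 1)); last by move=> u uv; rewrite arc_xor.
rewrite sum1_card cardC1. by rewrite subn1.
Qed.

Definition indeg v := \sum_u (arc u v : nat).

Lemma sf_indeg (S : {set V}) : sf indeg S = a_ arc [set: V] S.
Proof.
rewrite /sf aE exchange_big /=.
by apply: eq_bigl => u; rewrite inE.
Qed.

Lemma sf_T (T : {set V}) : #|T| * (#|V| - 1) = a_ arc [set: V] T + a_ arc T [set: V].
Proof.
rewrite -sum_nat_const !aE exchange_big -big_split /=.
apply: eq_bigr => v _; rewrite -(inout v); congr (_ + _); by apply: eq_bigl => u; rewrite inE.
Qed.

Lemma cond_from (hc : forall X Y Z : {set V},
     [disjoint X & Y] -> [disjoint Y & Z] -> [disjoint X & Z] ->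
     X :|: Y :|: Z = [set: V] ->
     a_ arc X Y <= a_ arc Y X + a_ arc X X + a_ arc Y Y + a_ arc Z X + a_ arc Y Z) :
  Cond indeg.
Proof.
move=> S T d.
have h := hc S T (~: (S :|: T)) d.
have d1 : [disjoint T & ~: (S :|: T)].
  by rewrite disjoints_subset setCK subsetUr.
have d2 : [disjoint S & ~: (S :|: T)].
  by rewrite disjoints_subset setCK subsetUl.
have := h d1 d2 (esym (setT3 S T)).
rewrite !sf_indeg sf_T (a3l S d) (a3l T d) (a3r T d).
have := aST d. lia.
Qed.

Lemma sum_indeg : \sum_v indeg v = #|arcs arc|.
Proof.
rewrite /arcs card_set_sum /indeg exchange_big pair_bigA /=.
by apply: eq_bigr => [[u v]].
Qed.

End Tour.


Section Decomp.
Variable V : finType.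
Variable arc : rel V.
Hypothesis htour : tournament arc.
Variable H : rel V.
Hypothesis hH : realizes H (indeg arc).

Definition InA v := [set u | arc u v && ~~ H u v].
Definition OutA v := [set w | arc v w && H v w].

Lemma card_InOut v : #|InA v| = #|OutA v|.
Proof.
case: hH => irr sym dg.
have := dg v; rewrite /deg /indeg.
have e1 : \sum_w (H v w : nat) = \sum_w ((arc v w && H v w : nat)) + \sum_w ((arc w v && H v w) : nat).
  rewrite -big_split; apply: eq_bigr => w _ /=.
  case: (eqVneq v w) => [<-|vw]; first by rewrite (negbTE (irr v)) !andbF.
  have := arc_xor htour vw; case: (H v w); rewrite ?andbT ?andbF //.
have e2 : \sum_u (arc u v : nat) = \sum_u ((arc u v && H v u) : nat) + \sum_u ((arc u v && ~~ H u v) : nat).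
  rewrite -big_split; apply: eq_bigr => u _ /=; rewrite (sym v u); by case: (arc u v); case: (H u v).
rewrite e1 e2 /InA /OutA !card_set_sum. lia.
Qed.

Definition Pset : {set V * V * V} :=
  [set t | [&& t.1.1 \in InA t.1.2, t.2 \in OutA t.1.2 &
              index t.1.1 (enum (InA t.1.2)) == index t.2 (enum (OutA t.1.2))]].

Lemma idx_inj (A : {set V}) x y : x \in A -> y \in A ->
  index x (enum A) = index y (enum A) -> x = y.
Proof.
move=> xA yA e; rewrite -(nth_index x (s := enum A) (x := x)) ?mem_enum //.
by rewrite e nth_index // mem_enum.
Qed.

Lemma matchIn v u : u \in InA v -> exists w, w \in OutA v /\
  index u (enum (InA v)) = index w (enum (OutA v)).
Proof.
move=> uA; set i := index u (enum (InA v)).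
have hi : i < size (enum (OutA v)) by rewrite -cardE -card_InOut cardE index_mem mem_enum.
exists (nth u (enum (OutA v)) i); split.
  by rewrite -mem_enum mem_nth.
by rewrite index_uniq // enum_uniq.
Qed.

Lemma matchOut v w : w \in OutA v -> exists u, u \in InA v /\
  index u (enum (InA v)) = index w (enum (OutA v)).
Proof.
move=> wA; set i := index w (enum (OutA v)).
have hi : i < size (enum (InA v)) by rewrite -cardE card_InOut cardE index_mem mem_enum.
exists (nth w (enum (InA v)) i); split.
  by rewrite -mem_enum mem_nth.
by rewrite index_uniq // enum_uniq.
Qed.

Lemma P3_arcsE (t : V * V * V) e : (e \in P3_arcs t) = (e == (t.1.1, t.1.2)) || (e == (t.1.2, t.2)).
Proof. by rewrite /P3_arcs !inE. Qed.

Lemma uniqP t1 t2 e : t1 \in Pset -> t2 \in Pset -> e \in P3_arcs t1 -> e \in P3_arcs t2 -> t1 = t2.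
Proof.
case: hH => irr sym dg.
case: t1 => [[a1 b1] c1]; case: t2 => [[a2 b2] c2].
rewrite !inE /= => /and3P [i1 o1 /eqP x1] /and3P [i2 o2 /eqP x2].
move=> /orP [] /eqP -> /orP [] /eqP [] => e1 e2; subst.
- congr (_, _); apply: (@idx_inj (OutA b2)); rewrite ?inE //; by rewrite -x1 -x2.
- move: i1 o2 => /andP [_ nH] /andP [_ hh]; by rewrite hh in nH.
- move: o1 i2 => /andP [_ hh] /andP [_ nH]; by rewrite hh in nH.
- congr (_, _, _); apply: (@idx_inj (InA b2)); rewrite ?inE //; by rewrite x1 x2.
Qed.

Lemma decomp : has_P3_decomposition arc.
Proof.
exists Pset; split; [|split].
- by move=> [[a b] c]; rewrite !inE /is_P3 /= => /and3P [/andP [-> _] /andP [-> _] _].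
- apply/and3P; split.
  + apply/eqP/setP => [[a b]]; rewrite /arcs inE /=; apply/bigcupP/idP.
      case=> B /imsetP [t tP ->]; rewrite P3_arcsE => /orP [] /eqP [-> ->].
        by move: tP; rewrite !inE => /and3P [/andP []].
      by move: tP; rewrite !inE => /and3P [_ /andP []].
    move=> ab; case Hab: (H a b).
      have bo : b \in OutA a by rewrite inE ab Hab.
      have [u [ui ue]] := matchOut bo.
      exists (P3_arcs (u, a, b)); first by apply/imsetP; exists (u, a, b) => //; rewrite /Pset in_set /= ui bo ue eqxx.
      by rewrite P3_arcsE eqxx orbT.
    have ai : a \in InA b by rewrite inE ab Hab.
    have [w [wo we]] := matchIn ai.
    exists (P3_arcs (a, b, w)); first by apply/imsetP; exists (a, b, w) => //; rewrite /Pset in_set /= ai wo we eqxx.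
    by rewrite P3_arcsE eqxx.
  + apply/trivIsetP => A B /imsetP [t1 t1P ->] /imsetP [t2 t2P ->] ne.
    rewrite -setI_eq0; apply/eqP/setP => e; rewrite !inE.
    apply/negP => /andP [e1 e2]; move/eqP: ne; apply; by rewrite (uniqP (e := e) t1P t2P) // P3_arcsE.
  + apply/imsetP => [[t tP]] /setP /(_ (t.1.1, t.1.2)); by rewrite P3_arcsE eqxx inE.
- move=> t1 t2 t1P t2P e.
  apply: (uniqP (e := (t1.1.1, t1.1.2))) => //; first by rewrite P3_arcsE eqxx.
  by rewrite -e P3_arcsE eqxx.
Qed.

End Decomp.


Section Nec.
Variable V : finType.
Variable arc : rel V.

Definition other (t : V * V * V) (e : V * V) :=
  if e == (t.1.1, t.1.2) then (t.1.2, t.2) else (t.1.1, t.1.2).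

Lemma other_in t e : e \in P3_arcs t -> other t e \in P3_arcs t.
Proof. rewrite /other !P3_arcsE; case: ifP => _ _; by rewrite eqxx ?orbT. Qed.

Lemma other_inj t e1 e2 : e1 \in P3_arcs t -> e2 \in P3_arcs t -> other t e1 = other t e2 -> e1 = e2.
Proof.
rewrite /other !P3_arcsE.
case: (eqVneq e1 (t.1.1, t.1.2)) => [->|n1] /=; case: (eqVneq e2 (t.1.1, t.1.2)) => [->|n2] //=.
- by move=> _ /eqP E2 e; rewrite E2 e.
- by move=> /eqP E1 _ e; rewrite E1 e.
- by move=> /eqP -> /eqP ->.
Qed.

Lemma cardU_le (T : finType) (A B : {set T}) : #|A :|: B| <= #|A| + #|B|.
Proof. by rewrite cardsU leq_subr. Qed.

Definition Aset (X Y : {set V}) := [set p : V * V | [&& p.1 \in X, p.2 \in Y & arc p.1 p.2]].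

Lemma necessity (P : {set V * V * V}) : P3_decomposition arc P ->
  forall X Y Z : {set V},
     [disjoint X & Y] -> [disjoint Y & Z] -> [disjoint X & Z] ->
     X :|: Y :|: Z = [set: V] ->
     a_ arc X Y <= a_ arc Y X + a_ arc X X + a_ arc Y Y + a_ arc Z X + a_ arc Y Z.
Proof.
move=> [hP3 [hpart hinj]] X Y Z dXY dYZ dXZ cov.
move/and3P: hpart => [/eqP hcov htriv h0].
have inV : forall w, [|| w \in X, w \in Y | w \in Z].
  move=> w; have : w \in [set: V] by rewrite inE.
  by rewrite -cov !inE orbA.
have blk : forall e : V * V, arc e.1 e.2 -> exists2 t, t \in P & e \in P3_arcs t.
  move=> e he; have : e \in cover [set P3_arcs t | t in P] by rewrite hcov inE.
  by case/bigcupP => B /imsetP [t tP ->] eB; exists t.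
have uniqT : forall t1 t2 e, t1 \in P -> t2 \in P -> e \in P3_arcs t1 -> e \in P3_arcs t2 -> t1 = t2.
  move=> t1 t2 e t1P t2P e1 e2; apply: hinj => //.
  case: (eqVneq (P3_arcs t1) (P3_arcs t2)) => // ne.
  have := (trivIsetP htriv) _ _ (imset_f _ t1P) (imset_f _ t2P) ne.
  by rewrite -setI_eq0 => /eqP /setP /(_ e); rewrite in_setI e1 e2 in_set0.
pose phi e := if [pick t in P | e \in P3_arcs t] is Some t then other t e else e.
have phiP : forall e : V * V, arc e.1 e.2 -> exists t, [/\ t \in P, e \in P3_arcs t & phi e = other t e].
  move=> e he; rewrite /phi; case: pickP => [t /andP [tP et] | none].
    by exists t.
  have [t tP et] := blk e he; have := none t; by rewrite tP et.
pose A := Aset X Y.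
pose B := Aset Y X :|: Aset X X :|: Aset Y Y :|: Aset Z X :|: Aset Y Z.
have inj : {in A &, injective phi}.
  move=> e1 e2; rewrite !inE => /and3P [_ _ h1] /and3P [_ _ h2] e.
  have [t1 [t1P et1 ph1]] := phiP e1 h1.
  have [t2 [t2P et2 ph2]] := phiP e2 h2.
  have o1 := other_in et1; have o2 := other_in et2.
  rewrite ph1 ph2 in e; rewrite e in o1.
  have tt := uniqT _ _ _ t1P t2P o1 o2; subst t2.
  exact: other_inj et1 et2 e.
have sub : phi @: A \subset B.
  apply/subsetP => g /imsetP [e]; rewrite inE => /and3P [eX eY he] ->.
  have [t [tP et ->]] := phiP e he.
  have /andP [a1 a2] := hP3 t tP.
  move: et; rewrite /other P3_arcsE; case: eqP => [E _ | _ /= /eqP ee].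
    rewrite E /= in eY; rewrite !inE /= eY a2 !andbT.
    by case/or3P: (inV t.2) => ->; rewrite ?orbT.
  rewrite ee /= in eX; rewrite !inE /= eX a1 !andbT.
  by case/or3P: (inV t.1.1) => ->; rewrite ?orbT.
have := subset_leq_card sub; rewrite card_in_imset //.
move=> h; apply: (leq_trans h).
rewrite /B /a_ -!/(Aset _ _).
apply: (leq_trans (cardU_le _ _)); rewrite leq_add2r.
apply: (leq_trans (cardU_le _ _)); rewrite leq_add2r.
apply: (leq_trans (cardU_le _ _)); rewrite leq_add2r.
exact: cardU_le.
Qed.

End Nec.

Theorem theorem3p2 (V : finType) (arc : rel V) :
  tournament arc ->
  ~~ odd #|arcs arc| ->
  (has_P3_decomposition arc <->
   forall X Y Z : {set V},
     [disjoint X & Y] -> [disjoint Y & Z] -> [disjoint X & Z] ->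
     X :|: Y :|: Z = [set: V] ->
     a_ arc X Y <= a_ arc Y X + a_ arc X X + a_ arc Y Y + a_ arc Z X + a_ arc Y Z).
Proof.
move=> ht hev; split.
  by case=> P hP; apply: necessity hP.
move=> hc.
have hC := cond_from ht hc.
have hev' : ~~ odd (\sum_v indeg arc v) by rewrite sum_indeg.
have [H hH] := ffactor hev' hC.
exact (@decomp V arc ht H hH).
Qed.
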